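(* Let $q\equiv 1\pmod 6$ be a prime power, let $\rho$ be a primitive element of $\mathbb F_q$, and let $\pi : (\mathbb Z_2^2)^* \to \mathbb Z_3$ be a bijection. Suppose $c = c^3_q(1,2)$ is odd and $l = (c+1)/2$. Then $\operatorname{Cay}(G_{l,2,q},S(\pi))$ is edge-regular with parameters $(4lq,\ 4l-2+q,\ 4l-2)$ and has a regular clique of order $4l$.
   Context: For an additive group $A$, $A^*=A\setminus\{0\}$. $G_{l,2,q}=\mathbb Z_l\oplus\mathbb Z_2^2\oplus\mathbb F_q$. $S_0=\{(g,0): g\in(\mathbb Z_l\oplus\mathbb Z_2^2)^*\}$; for $z\in(\mathbb Z_2^2)^*$, $S_{z,\pi}=\{(0,z,\rho^j): j\in\mathbb Z,\ j\equiv\pi(z)\pmod 3\}$; $S(\pi)=S_0\cup\bigcup_z S_{z,\pi}$; $\operatorname{Cay}(G_{l,2,q},S(\pi))$ has vertex set $G_{l,2,q}$ with $x\sim y$ iff $y-x\in S(\pi)$. Write $q=6r+1$; $C^3_q(i)=\{\rho^{3j+i}:0\le j\le 2r-1\}$ for $i\in\mathbb Z_3$, $c^3_q(a,b)=|(C^3_q(a)+1)\cap C^3_q(b)|$. A graph is edge-regular with parameters $(N,k,\lambda)$ if it is non-empty, has $N$ vertices, is $k$-regular, and every two adjacent vertices have exactly $\lambda$ common neighbours. A clique $\mathcal C$ is regular if every vertex outside $\mathcal C$ is adjacent to the same number $e>0$ of vertices of $\mathcal C$. *)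

(* Defs.v *)
From HB Require Import structures.
From mathcomp Require Import all_boot all_order all_algebra all_field.
Set Implicit Arguments. Unset Strict Implicit. Unset Printing Implicit Defensive.
Import GRing.Theory.
Local Open Scope ring_scope.

(* Z_l for l >= 1, as 'I_(l.-1).+1 (which has a canonical zmodType
   structure); equal to 'I_l whenever l >= 1. *)
Definition Zl (l : nat) := 'I_(l.-1).+1.
HB.instance Definition _ (l : nat) := GRing.Zmodule.on (Zl l).
HB.instance Definition _ (l : nat) := Finite.on (Zl l).

Definition Z22 := ('I_2 * 'I_2)%type.

Definition nzZ22 := {z : Z22 | z != 0}.

Definition Gl2q (l : nat) (F : finFieldType) := ((Zl l * Z22) * F)%type.

(* S(pi) = S_0 \cup \bigcup_z S_{z,pi}.  The exponents j range over
   0 <= j < q; since 3 | q-1 = order of rho, this gives exactly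
   {rho^j : j in Z, j = pi z mod 3}. *)
Definition inS (l : nat) (F : finFieldType) (rho : F) (pi : nzZ22 -> 'I_3)
  (x : Gl2q l F) : bool :=
  ((x.2 == 0) && (x.1 != 0)) ||
  ((x.1.1 == 0) &&
   [exists z : nzZ22, (x.1.2 == val z) &&
      [exists j : 'I_#|F|, (j %% 3 == pi z)%N && (x.2 == rho ^+ j)]]).

Definition cay_adj (l : nat) (F : finFieldType) (rho : F) (pi : nzZ22 -> 'I_3)
  : rel (Gl2q l F) := fun x y => inS rho pi (y - x).

(* cyclotomic classes C^3_q(i) = {rho^(3j+i) : 0 <= j <= 2r-1}, q = 6r+1 *)
Definition cyc_class (F : finFieldType) (rho : F) (i : nat) : {set F} :=
  [set rho ^+ (3 * j + i) | j : 'I_(2 * ((#|F|.-1) %/ 6))].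

Definition cyc_num (F : finFieldType) (rho : F) (a b : nat) : nat :=
  #|[set x + 1 | x in cyc_class rho a] :&: cyc_class rho b|.

Definition edge_regular (V : finType) (adj : rel V) (N k lam : nat) : Prop :=
  [/\ exists x y, adj x y,
      #|V| = N,
      forall x, #|[set y | adj x y]| = k &
      forall x y, adj x y -> #|[set z | adj x z && adj y z]| = lam].

Definition is_clique (V : finType) (adj : rel V) (C : {set V}) : Prop :=
  forall x y, x \in C -> y \in C -> x != y -> adj x y.

Definition regular_clique (V : finType) (adj : rel V) (C : {set V}) : Prop :=
  is_clique adj C /\
  exists e : nat, (0 < e)%N /\
    forall v, v \notin C -> #|[set y in C | adj v y]| = e.

(* Main.v *)
Require Import Defs.
From mathcomp Require Import all_boot all_order all_algebra all_field.
From mathcomp Require Import zify.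
Set Implicit Arguments. Unset Strict Implicit. Unset Printing Implicit Defensive.
Import GRing.Theory.
Local Open Scope ring_scope.
Definition dlog (F : finFieldType) (rho a : F) : nat :=
  if [pick i : 'I_(#|F|.-1) | rho ^+ i == a] is Some i then val i else 0.
Definition cls (F : finFieldType) (rho a : F) : nat := (dlog rho a %% 3)%N.

Lemma q_eq (F : finFieldType) : (#|F| %% 6 = 1)%N ->
  (#|F|.-1 = 6 * (#|F|.-1 %/ 6))%N /\ (0 < #|F|.-1 %/ 6)%N.
Proof.
move=> hq; have h2: (1 < #|F|)%N by apply: finNzRing_gt1.
lia.
Qed.

Lemma dlog_lt (F : finFieldType) (rho a : F) : (#|F| %% 6 = 1)%N ->
  (dlog rho a < #|F|.-1)%N.
Proof.
move=> hq; rewrite /dlog; case: pickP => [i _ | _]; first exact: ltn_ord.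
have [h1 h2] := q_eq hq; lia.
Qed.

Lemma dlogP (F : finFieldType) (rho a : F) : (#|F|.-1).-primitive_root rho ->
  a != 0 -> rho ^+ dlog rho a = a.
Proof.
move=> hr na; rewrite /dlog; case: pickP => [i /eqP // | none].
have h1 : a ^+ #|F|.-1 = 1.
  apply: (mulfI na); rewrite mulr1 -exprS prednK ?expf_card //.
  by apply/card_gt0P; exists 0.
case: (prim_rootP hr h1) => i hi; by have := none i; rewrite hi eqxx.
Qed.

Lemma rho_nz (F : finFieldType) (rho : F) : (#|F| %% 6 = 1)%N ->
  (#|F|.-1).-primitive_root rho -> rho != 0.
Proof.
move=> hq hr; apply/eqP => h0; have := prim_expr_order hr; rewrite h0 expr0n.
have [h1 h2] := q_eq hq; have hp : (0 < #|F|.-1)%N by lia.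
move: hp; case: (#|F|.-1) => // n _ /=.
by move/eqP; rewrite eq_sym oner_eq0.
Qed.

Lemma cls_exp (F : finFieldType) (rho : F) k : (#|F| %% 6 = 1)%N ->
  (#|F|.-1).-primitive_root rho -> cls rho (rho ^+ k) = (k %% 3)%N.
Proof.
move=> hq hr; rewrite /cls.
have := dlogP hr (expf_neq0 k (rho_nz hq hr)).
move/eqP; rewrite (eq_prim_root_expr hr) => /eqP h.
have [h1 _] := q_eq hq.
have d3 : (3 %| #|F|.-1)%N by rewrite h1 dvdn_mulr.
by rewrite -(modn_dvdm _ d3) h (modn_dvdm _ d3).
Qed.

Lemma cls_lt3 (F : finFieldType) (rho a : F) : (cls rho a < 3)%N.
Proof. by rewrite /cls ltn_pmod. Qed.

Lemma cls_mul (F : finFieldType) (rho a b : F) : (#|F| %% 6 = 1)%N ->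
  (#|F|.-1).-primitive_root rho -> a != 0 -> b != 0 ->
  cls rho (a * b) = ((cls rho a + cls rho b) %% 3)%N.
Proof.
move=> hq hr na nb; rewrite -(dlogP hr na) -(dlogP hr nb) -exprD !cls_exp //.
by rewrite modnDm.
Qed.

Lemma cls_opp (F : finFieldType) (rho a : F) : (#|F| %% 6 = 1)%N ->
  (#|F|.-1).-primitive_root rho -> a != 0 -> cls rho (- a) = cls rho a.
Proof.
move=> hq hr na; have [h1 h2] := q_eq hq.
set r := (#|F|.-1 %/ 6)%N in h1 h2.
have hm : rho ^+ (3 * r) = -1.
  have : (rho ^+ (3 * r)) ^+ 2 == 1.
    by rewrite -exprM -(prim_expr_order hr) h1 mulnAC.
  rewrite sqrf_eq1 => /orP [|/eqP //].
  rewrite -(expr0 rho) (eq_prim_root_expr hr) h1 mod0n => /eqP.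
  rewrite modn_small; lia.
have hn : - 1 != 0 :> F by rewrite oppr_eq0 oner_eq0.
rewrite -mulN1r cls_mul // -hm cls_exp //.
by rewrite (mulnC 3) modnMl add0n modn_mod.
Qed.

Lemma inC_eq (F : finFieldType) (rho a : F) (i : nat) : (#|F| %% 6 = 1)%N ->
  (#|F|.-1).-primitive_root rho -> (i < 3)%N ->
  [exists j : 'I_#|F|, ((j %% 3)%N == i) && (a == rho ^+ j)] =
  (a != 0) && (cls rho a == i).
Proof.
move=> hq hr hi; apply/existsP/andP.
  case=> j /andP [/eqP hj /eqP ->]; split; first exact: expf_neq0 (rho_nz hq hr).
  by rewrite cls_exp // hj.
case=> na /eqP hc.
have hl : (dlog rho a < #|F|)%N by have := dlog_lt rho a hq; lia.
exists (Ordinal hl); rewrite /= dlogP // eqxx andbT.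
by rewrite -hc.
Qed.

Lemma cyc_classE (F : finFieldType) (rho a : F) (i : nat) : (#|F| %% 6 = 1)%N ->
  (#|F|.-1).-primitive_root rho -> (i < 3)%N ->
  (a \in cyc_class rho i) = (a != 0) && (cls rho a == i).
Proof.
move=> hq hr hi; apply/imsetP/andP.
  case=> j _ ->; split; first exact: expf_neq0 (rho_nz hq hr).
  by rewrite cls_exp //; apply/eqP; lia.
case=> na /eqP hc.
have [h1 h2] := q_eq hq.
have hl := dlog_lt rho a hq.
have hj : (dlog rho a %/ 3 < 2 * (#|F|.-1 %/ 6))%N by lia.
exists (Ordinal hj) => //=.
rewrite -hc /cls mulnC -divn_eq dlogP //.
Qed.
Lemma z22_dbl (u : Z22) : u + u = 0.
Proof. apply/eqP; case: u => [[[|[|//]] ?] [[|[|//]] ?]]; by []. Qed.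
Lemma z22_key (u v t : Z22) : u != 0 -> v != 0 -> t != 0 -> (v - u == t) = [&& v != u, t != u & t != v].
Proof. case: u => [[[|[|//]] ?] [[|[|//]] ?]]; case: v => [[[|[|//]] ?] [[|[|//]] ?]];case: t => [[[|[|//]] ?] [[|[|//]] ?]]; by []. Qed.

Definition cl3 (F : finFieldType) (rho a : F) : 'I_3 := Ordinal (cls_lt3 rho a).
Definition sig (F : finFieldType) (rho : F) (g : 'I_3 -> nzZ22) (a : F) : Z22 :=
  val (g (cl3 rho a)).

Lemma inS_eq l (F : finFieldType) (rho : F) pi g : (#|F| %% 6 = 1)%N ->
  (#|F|.-1).-primitive_root rho -> cancel pi g -> cancel g pi ->
  forall w : Gl2q l F,
  inS rho pi w = ((w.2 == 0) && (w.1 != 0)) || ((w.1 == (0, sig rho g w.2)) && (w.2 != 0)).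
Proof.
move=> hq hr pig gpi w; rewrite /inS; congr (_ || _).
case: w => [[h1 h2] b] /=; rewrite xpair_eqE -andbA; congr (_ && _).
apply/existsP/andP.
  case=> z /andP [/eqP -> ]; rewrite inC_eq //; case/andP => nb /eqP hc; split=> //.
  have E : cl3 rho b = pi z by apply: val_inj; rewrite /= hc.
  by rewrite /sig E pig.
case=> /eqP -> nb; exists (g (cl3 rho b)); rewrite eqxx /= inC_eq // nb gpi /=.
by [].
Qed.

Lemma sig_nz (F : finFieldType) (rho : F) g a : sig rho g a != 0.
Proof. exact: valP (g _). Qed.

Lemma sig_eq (F : finFieldType) (rho : F) pi g : cancel g pi -> forall a b : F,
  (sig rho g a == sig rho g b) = (cls rho a == cls rho b).
Proof.
move=> gpi a b; rewrite /sig (inj_eq val_inj) (inj_eq (can_inj gpi)).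
by [].
Qed.

Lemma sig_opp (F : finFieldType) (rho : F) g a : (#|F| %% 6 = 1)%N ->
  (#|F|.-1).-primitive_root rho -> a != 0 -> sig rho g (- a) = sig rho g a.
Proof.
move=> hq hr na; rewrite /sig; congr (val (g _)); apply: val_inj => /=.
exact: cls_opp.
Qed.

Lemma card_transl (V : finType) (T : zmodType) (e : V -> T) (e' : T -> V)
  : True.
Proof. by []. Qed.

Lemma card_slice (A B : finType) (b0 : B) (P : pred A) :
  #|[set w : A * B | (w.2 == b0) && P w.1]| = #|[set h | P h]|.
Proof.
have -> : [set w : A * B | (w.2 == b0) && P w.1] = [set (h, b0) | h in [set h | P h]].
  apply/setP => [[h b]]; rewrite !inE /=.
  apply/andP/imsetP => [[/eqP -> ph] | [h' ph' [-> ->]]].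
    by exists h; rewrite ?inE.
  by rewrite inE in ph'.
by apply: card_imset => x y [].
Qed.

Lemma card_graph (A B : finType) (f : B -> A) (P : pred B) :
  #|[set w : A * B | (w.1 == f w.2) && P w.2]| = #|[set b | P b]|.
Proof.
have -> : [set w : A * B | (w.1 == f w.2) && P w.2] = [set (f b, b) | b in [set b | P b]].
  apply/setP => [[h b]]; rewrite !inE /=.
  apply/andP/imsetP => [[/eqP -> ph] | [h' ph' [-> ->]]].
    by exists b; rewrite ?inE.
  by rewrite inE in ph'.
by apply: card_imset => x y [].
Qed.

Lemma card_shift l (F : finFieldType) (P : pred (Gl2q l F)) (x : Gl2q l F) :
  #|[set y : Gl2q l F | P (y - x)]| = #|[set w | P w]|.
Proof.
have -> : [set y : Gl2q l F | P (y - x)] = [set (w : Gl2q l F) + x | w in [set w | P w]].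
  apply/setP => y; rewrite inE; apply/idP/imsetP => [py | [w pw ->]].
    by exists (y - x); rewrite ?inE ?subrK.
  by rewrite addrK; rewrite inE in pw.
by apply: card_imset; apply: addIr.
Qed.

Lemma card_H l : (0 < l)%N -> #|{: Zl l * Z22}| = (4 * l)%N.
Proof.
move=> hl; rewrite card_prod /Zl /Z22 card_prod !card_ord prednK //; lia.
Qed.

Lemma card_Hnz l : (0 < l)%N -> #|[set h : Zl l * Z22 | h != 0]| = (4 * l - 1)%N.
Proof.
move=> hl; have -> : [set h : Zl l * Z22 | h != 0] = [set~ (0 : Zl l * Z22)] by apply/setP => h; rewrite !inE.
rewrite cardsC1 card_H //; lia.
Qed.

Lemma card_Hnz2 l (s : Zl l * Z22) : (0 < l)%N -> s != 0 ->
  #|[set h : Zl l * Z22 | (h != 0) && (h != s)]| = (4 * l - 2)%N.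
Proof.
move=> hl ns.
have -> : [set h : Zl l * Z22 | (h != 0) && (h != s)] = [set~ (0 : Zl l * Z22)] :\ s.
  by apply/setP => h; rewrite !inE andbC.
have := cardsD1 s [set~ (0 : Zl l * Z22)]; rewrite !inE ns cardsC1 card_H // /=; lia.
Qed.

Lemma card_S l (F : finFieldType) (rho : F) pi g : (#|F| %% 6 = 1)%N ->
  (#|F|.-1).-primitive_root rho -> cancel pi g -> cancel g pi -> (0 < l)%N ->
  #|[set w : Gl2q l F | inS rho pi w]| = (4 * l - 2 + #|F|)%N.
Proof.
move=> hq hr pig gpi hl.
have -> : [set w : Gl2q l F | inS rho pi w] =
   [set w : Gl2q l F | (w.2 == 0) && (w.1 != 0)] :|:
   [set w : Gl2q l F | (w.1 == (0, sig rho g w.2)) && (w.2 != 0)].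
  by apply/setP => w; rewrite !inE (inS_eq hq hr pig gpi).
rewrite cardsU.
have -> : [set w : Gl2q l F | (w.2 == 0) && (w.1 != 0)] :&:
   [set w : Gl2q l F | (w.1 == (0, sig rho g w.2)) && (w.2 != 0)] = set0.
  by apply/setP => w; rewrite !inE; case: eqP; rewrite /= ?andbF.
rewrite cards0 subn0.
have E0 : #|[set w : Gl2q l F | (w.2 == 0) && (w.1 != 0)]| = (4 * l - 1)%N.
  rewrite -(card_Hnz hl) -[RHS](card_slice (0 : F)); apply: eq_card => w; by rewrite !inE.
have E1 : #|[set w : Gl2q l F | (w.1 == (0, sig rho g w.2)) && (w.2 != 0)]| = #|F|.-1.
  rewrite -(cardsC1 (0 : F)) -[RHS](card_graph (fun b : F => (0 : Zl l, sig rho g b))).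
  by apply: eq_card => w; rewrite !inE.
rewrite E0 E1; have [h1 h2] := q_eq hq; lia.
Qed.

Lemma caseA l (F : finFieldType) (rho : F) pi g : (#|F| %% 6 = 1)%N ->
  (#|F|.-1).-primitive_root rho -> cancel pi g -> cancel g pi -> (0 < l)%N ->
  forall s : Gl2q l F, s.2 = 0 -> s.1 != 0 ->
  #|[set w : Gl2q l F | inS rho pi w && inS rho pi (w - s)]| = (4 * l - 2)%N.
Proof.
move=> hq hr pig gpi hl s hs ns.
rewrite -(card_Hnz2 hl ns) -[RHS](card_slice (0 : F)); apply: eq_card => w.
rewrite !inE !(inS_eq hq hr pig gpi).
case: w s hs ns => [h b] [s1 s2] /= -> ns.
rewrite !subr0; case: (eqVneq b 0) => [->|nb] /=.
  by rewrite !andbF !orbF subr_eq0.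
rewrite !andbT; apply/negbTE; apply/negP => /andP [/eqP -> /eqP h'].
have : - s1 = 0.
  by apply: (addrI ((0, sig rho g b) : Zl l * Z22)); rewrite addr0.
by move/eqP; rewrite oppr_eq0 (negbTE ns).
Qed.

Definition Qp (F : finFieldType) (rho a b : F) : bool :=
  [&& b != 0, b != a, cls rho b != cls rho a, cls rho (b - a) != cls rho a
    & cls rho (b - a) != cls rho b].

Lemma caseB l (F : finFieldType) (rho : F) pi g : (#|F| %% 6 = 1)%N ->
  (#|F|.-1).-primitive_root rho -> cancel pi g -> cancel g pi ->
  forall s : Gl2q l F, s.1 == (0, sig rho g s.2) -> s.2 != 0 ->
  #|[set w : Gl2q l F | inS rho pi w && inS rho pi (w - s)]| =
  #|[set b | Qp rho s.2 b]|.
Proof.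
move=> hq hr pig gpi s hs na.
rewrite -[RHS](card_graph (fun b : F => (0 : Zl l, sig rho g b))); apply: eq_card => w.
rewrite !inE !(inS_eq hq hr pig gpi).
case: w s hs na => [h b] [s1 a] /= /eqP -> na.
case: (eqVneq b 0) => [->|nb] /=.
  rewrite /Qp eqxx andbF /= sub0r oppr_eq0 (negbTE na) /= andbT sig_opp //.
  apply/negbTE; apply/negP => /andP [hnz /eqP he].
  have hh : h = (0, sig rho g a) + (0, sig rho g a) by rewrite -{1}he subrK.
  have E : ((0, sig rho g a) + (0, sig rho g a) : Zl l * Z22) = 0.
    by apply/eqP; rewrite xpair_eqE /= z22_dbl eqxx.
  by move: hnz; rewrite orbF hh E eqxx.
case: eqP => [->|nh] /=; last by [].
case: (eqVneq b a) => [->|nba].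
  by rewrite /Qp !subrr !eqxx /= !andbF.
have E : ((0, sig rho g b) - (0, sig rho g a) : Zl l * Z22) = (0, sig rho g b - sig rho g a).
  by apply/eqP; rewrite xpair_eqE /= subrr !eqxx.
have nba' : b - a != 0 by rewrite subr_eq0.
rewrite E subr_eq0 (negbTE nba) /= andbT; rewrite -[_ == _]/((0 == 0 :> Zl l) && (sig rho g b - sig rho g a == sig rho g (b - a))) eqxx /=.
rewrite z22_key ?sig_nz // !(sig_eq _ gpi) /Qp nb nba /=.
by [].
Qed.

Definition Y21 (F : finFieldType) (rho : F) :=
  [set y : F | [&& y != 0, y - 1 != 0, cls rho y == 2%N & cls rho (y - 1) == 1%N]].
Definition Y12 (F : finFieldType) (rho : F) :=
  [set y : F | [&& y != 0, y - 1 != 0, cls rho y == 1%N & cls rho (y - 1) == 2%N]].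

Lemma cyc_Y21 (F : finFieldType) (rho : F) : (#|F| %% 6 = 1)%N ->
  (#|F|.-1).-primitive_root rho -> cyc_num rho 1 2 = #|Y21 rho|.
Proof.
move=> hq hr; apply: eq_card => y; rewrite !inE.
have -> : (y \in [set x + 1 | x in cyc_class rho 1]) = (y - 1 \in cyc_class rho 1).
  apply/imsetP/idP => [[x hx ->]|h]; first by rewrite addrK.
  by exists (y - 1); rewrite ?subrK.
rewrite !cyc_classE //.
by case: (y == 0); case: (y - 1 == 0); case: (cls rho y == 2%N); case: (cls rho (y - 1) == 1%N).
Qed.

Lemma Y12_Y21 (F : finFieldType) (rho : F) : (#|F| %% 6 = 1)%N ->
  (#|F|.-1).-primitive_root rho -> #|Y12 rho| = #|Y21 rho|.
Proof.
move=> hq hr.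
have -> : Y12 rho = [set 1 - y | y in Y21 rho].
  apply/setP => y.
  have -> : (y \in [set 1 - y | y in Y21 rho]) = (1 - y \in Y21 rho).
    apply/imsetP/idP => [[x hx ->]|h]; first by rewrite subKr.
    by exists (1 - y); rewrite ?subKr.
  rewrite !inE.
  case: (eqVneq y 0) => [->|ny] /=; first by rewrite subr0 subrr eqxx /= andbF.
  case: (eqVneq y 1) => [->|n1] /=; first by rewrite subrr eqxx.
  have n1' : y - 1 != 0 by rewrite subr_eq0.
  have n1'' : 1 - y != 0 by rewrite subr_eq0 eq_sym.
  rewrite n1' n1'' /= (_ : 1 - y - 1 = - y); last by rewrite addrAC subrr add0r.
  rewrite oppr_eq0 ny /= cls_opp // -opprB cls_opp //.
  by rewrite andbC.
by apply: card_imset; exact: can_inj (subKr 1).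
Qed.

Lemma countQ (F : finFieldType) (rho a : F) : (#|F| %% 6 = 1)%N ->
  (#|F|.-1).-primitive_root rho -> a != 0 ->
  #|[set b | Qp rho a b]| = (2 * cyc_num rho 1 2)%N.
Proof.
move=> hq hr na.
have -> : [set b | Qp rho a b] = [set a * y | y in Y21 rho :|: Y12 rho].
  apply/setP => b.
  have -> : (b \in [set a * y | y in Y21 rho :|: Y12 rho]) = (a^-1 * b \in Y21 rho :|: Y12 rho).
    apply/imsetP/idP => [[x hx ->]|h]; first by rewrite mulKf.
    by exists (a^-1 * b); rewrite ?mulVKf.
  rewrite -{1}(mulVKf na b); move: (a^-1 * b) => y.
  rewrite !inE /Qp mulf_eq0 (negbTE na) /=.
  case: (eqVneq y 0) => [->|ny] //=.
  rewrite -{2}(mulr1 a) (inj_eq (mulfI na)).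
  case: (eqVneq y 1) => [->|n1] /=; first by rewrite subrr eqxx.
  have n1' : y - 1 != 0 by rewrite subr_eq0.
  rewrite n1' (_ : a * y - a = a * (y - 1)); last by rewrite mulrBr mulr1.
  rewrite !cls_mul //.
  move: (cls_lt3 rho a) (cls_lt3 rho y) (cls_lt3 rho (y - 1)).
  move: (cls rho a) (cls rho y) (cls rho (y - 1)) => ca cy cz.
  by case: ca => [|[|[|]]] //; case: cy => [|[|[|]]] //; case: cz => [|[|[|]]].
rewrite card_imset; last exact: mulfI.
rewrite cardsU.
have -> : Y21 rho :&: Y12 rho = set0.
  apply/setP => y; rewrite !inE.
  by case: (cls rho y == 2%N) / eqP => [->|] //=; rewrite !andbF.
by rewrite cards0 subn0 Y12_Y21 // cyc_Y21 //; lia.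
Qed.

Lemma clique_one l (F : finFieldType) (rho : F) pi g : (#|F| %% 6 = 1)%N ->
  (#|F|.-1).-primitive_root rho -> cancel pi g -> cancel g pi ->
  forall v : Gl2q l F, v.2 != 0 ->
  #|[set y in [set w : Gl2q l F | w.2 == 0] | cay_adj rho pi v y]| = 1%N.
Proof.
move=> hq hr pig gpi v nv.
have -> : [set y in [set w : Gl2q l F | w.2 == 0] | cay_adj rho pi v y] =
   [set ((v.1.1, v.1.2 + sig rho g (- v.2)), 0)].
  apply/setP => [[[h1 h2] b]]; rewrite !inE /cay_adj (inS_eq hq hr pig gpi).
  case: v nv => [[v1 v2] c] /= nc.
  case: (eqVneq b 0) => [->|nb] /=; last first.
    by apply/esym/eqP => -[_ _ e]; move: nb; rewrite e eqxx.
  rewrite sub0r oppr_eq0 (negbTE nc) /= andbT.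
  rewrite -[(h1, h2) - (v1, v2)]/(h1 - v1, h2 - v2).
  apply/eqP/eqP => [E | [-> ->]].
    have e1 : h1 - v1 = 0 := congr1 fst E.
    have e2 : h2 - v2 = sig rho g (- c) := congr1 snd E.
    have -> : h1 = v1 by move/eqP: e1; rewrite subr_eq0 => /eqP.
    by rewrite -e2 addrC subrK.
  by rewrite subrr addrC addKr.
by rewrite cards1.
Qed.

Unset Implicit Arguments.
Set Strict Implicit.

Theorem theorem3p6 (F : finFieldType) (rho : F) (pi : nzZ22 -> 'I_3)
    (c l : nat) :
  (#|F| %% 6 = 1)%N ->
  (#|F|.-1).-primitive_root rho ->
  bijective pi ->
  c = cyc_num rho 1 2 ->
  odd c ->
  l = ((c + 1) %/ 2)%N ->
  edge_regular (cay_adj (l := l) rho pi)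
    (4 * l * #|F|) (4 * l - 2 + #|F|) (4 * l - 2)
  /\ exists C : {set Gl2q l F},
       regular_clique (cay_adj (l := l) rho pi) C /\ #|C| = (4 * l)%N.
Proof.
move=> hq hr [g pig gpi] hc hodd hl.
have hc2 : c = (2 * (c %/ 2) + 1)%N.
  by rewrite {1}(divn_eq c 2) modn2 hodd; lia.
have hl0 : (0 < l)%N by lia.
have h4 : (4 * l - 2 = 2 * c)%N by lia.
split.
  split.
  - exists 0, ((0, (ord_max, ord0)), 0).
    rewrite /cay_adj subr0 (inS_eq hq hr pig gpi) /= eqxx /=.
    by [].
  - by rewrite /Gl2q card_prod card_H.
  - move=> x; rewrite /cay_adj (card_shift (inS rho pi) x).
    exact: card_S.
  - move=> x y hxy.
    transitivity #|[set w : Gl2q l F | inS rho pi w && inS rho pi (w - (y - x))]|.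
      rewrite -[RHS](card_shift _ x); apply: eq_card => z.
      by rewrite !inE /cay_adj opprB addrA subrK.
    move: hxy; rewrite /cay_adj (inS_eq hq hr pig gpi).
    case/orP => [/andP [/eqP h2 h1] | /andP [h1 h2]].
      exact: caseA.
    by rewrite (caseB hq hr pig gpi h1 h2) countQ // -hc h4.
exists [set w : Gl2q l F | w.2 == 0]; split; last first.
  rewrite -(card_H hl0) -cardsT -[RHS](card_slice (0 : F)).
  by apply: eq_card => w; rewrite !inE andbT.
split.
  move=> [x1 x2] [y1 y2]; rewrite !inE /= => /eqP -> /eqP -> nxy.
  rewrite /cay_adj (inS_eq hq hr pig gpi) /= subrr eqxx /= subr_eq0.
  by apply/orP; left; apply: contraNneq nxy => ->.
exists 1%N; split=> // v; rewrite inE => nv.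
exact: clique_one.
Qed.
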